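(* Let $n$ be a positive integer and let $$A_n' := \{(0,S_1,\dots,S_{2n}) \in \mathbb{Z}^{2n+1} : |S_i - S_{i-1}| = 1 \text{ for } 1\le i\le 2n \ (S_0=0),\ S_1>0,\ S_{2n}=0\},$$ $$B_n' := \{(0,S_1,\dots,S_{2n}) \in \mathbb{Z}^{2n+1} : |S_i - S_{i-1}| = 1 \text{ for } 1\le i\le 2n \ (S_0=0),\ S_i>0 \text{ for all } 1\le i\le 2n\}.$$ For $(0,S_1,\dots,S_{2n})\in A_n'$, let $M:=\max\{S_1,\dots,S_{2n}\}$, let $a_M:=\min\{1\le i\le 2n: S_i=M\}$, $b_0:=0$, and for $k=M-1,M-2,\dots,1$ define inductively $$a_k:=\min\{1\le i\le a_{k+1}: S_i=k\},\qquad b_k:=\max\{1\le i\le a_{k+1}: S_i=k\}.$$ For $\ell=1,\dots,2n$ define $$T_\ell:=\begin{cases}2m-S_\ell & \text{if } a_m\le \ell\le b_m \text{ for some } m\in\{1,\dots,M-1\},\\ 2M-S_\ell & \text{if } \ell\ge a_M,\end{cases}$$ and let $\Phi_1(0,S_1,\dots,S_{2n}):=(0,T_1,\dots,T_{2n})$. Then $\Phi_1$ is a well-defined map from $A_n'$ to $B_n'$ and it is a bijection between $A_n'$ and $B_n'$.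
   Context: These are paths of the $2n$-step simple random walk on $\mathbb{Z}$ started at the origin: $A_n'$ consists of paths whose first step is up and which end at $0$; $B_n'$ consists of paths staying strictly positive at all times $1,\dots,2n$. *)

(* Defs.v *)
(* Paths are sequences s = [:: S_0; S_1; ...; S_(2n)] of integers. *)
From mathcomp Require Import all_boot all_order all_algebra.
Set Implicit Arguments. Unset Strict Implicit. Unset Printing Implicit Defensive.
Import Order.TTheory GRing.Theory Num.Theory.
Local Open Scope ring_scope.

Definition walk (n : nat) (s : seq int) : bool :=
  [&& size s == (2 * n).+1, s`_0 == 0 &
      all (fun i => `|s`_i - s`_i.-1| == 1) (iota 1 (2 * n))].

Definition An' (n : nat) : pred (seq int) :=
  fun s => [&& walk n s, 0 < s`_1 & s`_(2 * n) == 0].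

Definition Bn' (n : nat) : pred (seq int) :=
  fun s => walk n s && all (fun i => 0 < s`_i) (iota 1 (2 * n)).

Definition Mx (s : seq int) : int := \big[Num.max/ s`_1]_(1 <= i < size s) s`_i.
(* M as a natural number (M >= 1 on A_n') *)
Definition Mn (s : seq int) : nat := `|Mx s|%N.

Definition minidx (s : seq int) (v : int) (bnd : nat) : nat :=
  head 0%N [seq i <- iota 1 bnd | s`_i == v].
Definition maxidx (s : seq int) (v : int) (bnd : nat) : nat :=
  last 0%N [seq i <- iota 1 bnd | s`_i == v].

(* a_aux s j = a_{M-j} *)
Fixpoint a_aux (s : seq int) (j : nat) : nat :=
  match j with
  | 0 => minidx s (Mx s) (size s).-1
  | j'.+1 => minidx s (Mx s - j'.+1%:R) (a_aux s j')
  end.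

Definition a_ (s : seq int) (k : nat) : nat := a_aux s (Mn s - k).
Definition b_ (s : seq int) (k : nat) : nat := maxidx s k%:R (a_ s k.+1).

(* Phi_1: T_0 = 0; T_l = 2m - S_l if a_m <= l <= b_m (1 <= m <= M-1),
   T_l = 2M - S_l otherwise (i.e. when l >= a_M, by well-definedness). *)
Definition Phi1 (s : seq int) : seq int :=
  mkseq (fun l =>
    if l == 0%N then 0 else
    match [seq m <- iota 1 (Mn s).-1 | (a_ s m <= l <= b_ s m)%N] with
    | m :: _ => 2 * m%:R - s`_l
    | [::] => 2 * (Mn s)%:R - s`_l
    end) (size s).

Definition Phi1_well_defined (n : nat) (s : seq int) : Prop :=
  [/\ has (fun i => s`_i == Mx s) (iota 1 (2 * n)),
      (forall k, (1 <= k < Mn s)%N -> has (fun i => s`_i == k%:R) (iota 1 (a_ s k.+1)))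
    & (forall l, (1 <= l <= 2 * n)%N ->
        (count (fun m => a_ s m <= l <= b_ s m) (iota 1 (Mn s).-1)
          + (a_ s (Mn s) <= l))%N = 1%N)].

(* Main.v *)
Require Import Defs.
From mathcomp Require Import all_boot all_order all_algebra.
From mathcomp Require Import zify.
Set Implicit Arguments. Unset Strict Implicit. Unset Printing Implicit Defensive.
Import Order.TTheory GRing.Theory Num.Theory.
Local Open Scope ring_scope.

Definition Rm (s : seq int) (l : nat) : int := \big[Num.max/ s`_1]_(1 <= i < l.+1) s`_i.
Definition Jm (t : seq int) (N l : nat) : int := \big[Num.min/ t`_N]_(l <= i < N.+1) t`_i.
Definition Pt (s : seq int) : seq int :=
  mkseq (fun l => if l == 0%N then 0 else 2 * Rm s l - s`_l) (size s).
Definition Qt (t : seq int) : seq int :=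
  mkseq (fun l => if l == 0%N then 0 else
     2 * Num.min (Jm t (size t).-1 l) (t`_((size t).-1) %/ 2)%Z - t`_l) (size t).

Lemma bigmax_recr (x : int) (F : nat -> int) m l : (m <= l)%N ->
  \big[Num.max/x]_(m <= i < l.+1) F i = Num.max (\big[Num.max/x]_(m <= i < l) F i) (F l).
Proof.
move=> hml; move: {2}(l - m)%N (erefl (l - m)%N) => d; elim: d m hml => [|d IH] m hml hd.
  have -> : m = l by lia.
  rewrite big_ltn // !big_geq //; lia.
rewrite big_ltn; last by lia.
rewrite [\big[_/_]_(m <= i < l) _]big_ltn; last by lia.
rewrite IH; [by rewrite maxA|lia|lia].
Qed.

Lemma Rm_rec (s : seq int) l : Rm s l.+1 = Num.max (Rm s l) s`_l.+1.
Proof. by rewrite /Rm bigmax_recr. Qed.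

Lemma Rm0 (s : seq int) : Rm s 0 = s`_1.
Proof. by rewrite /Rm big_geq. Qed.

Lemma Rm1 (s : seq int) : Rm s 1 = s`_1.
Proof. rewrite Rm_rec Rm0; lia. Qed.

Lemma Rm_ge (s : seq int) i l : (1 <= i <= l)%N -> s`_i <= Rm s l.
Proof.
elim: l => [|l IH] hi; first lia.
rewrite Rm_rec; case: (ltnP i l.+1) => h.
  have := IH ltac:(lia); lia.
have -> : i = l.+1 by lia.
clear IH; lia.
Qed.

Lemma Rm_mono (s : seq int) l l' : (l <= l')%N -> Rm s l <= Rm s l'.
Proof.
elim: l' => [|l' IH] h.
  by have -> : l = 0%N by lia.
case: (ltnP l l'.+1) => h'.
  rewrite Rm_rec; have := IH ltac:(lia); lia.
by have -> : l = l'.+1 by lia.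
Qed.

Lemma Rm_att (s : seq int) l : (0 < l)%N -> exists i, (0 < i <= l)%N /\ Rm s l = s`_i.
Proof.
elim: l => [|l IH] h; first lia.
case: l IH h => [_ _|l IH h].
  by exists 1%N; rewrite Rm1.
rewrite Rm_rec.
have [i [hi ->]] := IH ltac:(lia).
case: (leP s`_i s`_l.+2) => h2.
  exists l.+2; split; [lia|lia].
exists i; split; [lia|lia].
Qed.

Lemma Jm_N (t : seq int) N : Jm t N N = t`_N.
Proof. rewrite /Jm big_ltn // big_geq //; lia. Qed.

Lemma Jm_rec (t : seq int) N l : (l < N)%N -> Jm t N l = Num.min t`_l (Jm t N l.+1).
Proof. move=> h; by rewrite /Jm big_ltn //; lia. Qed.

Lemma Jm_le (t : seq int) N l i : (l <= i <= N)%N -> Jm t N l <= t`_i.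
Proof.
move: {2}(N - l)%N (erefl (N - l)%N) => d; elim: d l => [|d IH] l hd hi.
  have -> : l = N by lia. have -> : i = N by lia. rewrite Jm_N; lia.
rewrite Jm_rec; last lia.
case: (ltnP l i) => h.
  have := IH l.+1 ltac:(lia) ltac:(lia); lia.
have -> : i = l by lia. lia.
Qed.

Lemma Jm_ge (t : seq int) N l c : (l <= N)%N -> (forall i, (l <= i <= N)%N -> c <= t`_i) -> c <= Jm t N l.
Proof.
move: {2}(N - l)%N (erefl (N - l)%N) => d; elim: d l => [|d IH] l hd hl hc.
  have -> : l = N by lia. rewrite Jm_N; apply: hc; lia.
rewrite Jm_rec; last lia.
have h1 := hc l ltac:(lia).
have h2 := IH l.+1 ltac:(lia) ltac:(lia) (fun i hi => hc i ltac:(lia)).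
lia.
Qed.

Lemma walkP n (s : seq int) : walk n s ->
  [/\ size s = (2*n).+1, s`_0 = 0 & forall i, (0 < i <= 2*n)%N -> `|s`_i - s`_i.-1| = 1].
Proof.
case/and3P => /eqP h1 /eqP h2 /allP h3; split => // i hi; apply/eqP/h3.
rewrite mem_iota; lia.
Qed.

Lemma walkI n (s : seq int) : size s = (2*n).+1 -> s`_0 = 0 ->
  (forall i, (0 < i <= 2*n)%N -> `|s`_i - s`_i.-1| = 1) -> walk n s.
Proof.
move=> h1 h2 h3; apply/and3P; split; [exact/eqP|exact/eqP|].
apply/allP => i; rewrite mem_iota => hi; apply/eqP/h3; lia.
Qed.

Lemma ivt (s : seq int) N
  (hst : forall i, (0 < i <= N)%N -> `|s`_i - s`_i.-1| = 1) (v : int) d :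
  forall p, (p + d <= N)%N -> s`_p <= v -> v <= s`_(p+d) ->
  exists i, (p <= i <= p + d)%N /\ s`_i = v.
Proof.
elim: d => [|d IH] p hpd h1 h2.
  exists p; rewrite addn0 in h2; split; [lia|lia].
case: (eqVneq s`_p v) => hv.
  by exists p; split; [lia|].
have hs : `|s`_p.+1 - s`_p| = 1 := hst p.+1 ltac:(lia).
move/eqP: hv => hv.
have h3 : s`_p.+1 <= v by clear IH hst; lia.
have [i [hi hi2]] := IH p.+1 ltac:(lia) h3 ltac:(by rewrite addSnnS).
by exists i; split; [lia|].
Qed.

Lemma head_filter_iota (p : pred nat) m B : has p (iota m B) ->
  [/\ (m <= head 0%N (filter p (iota m B)) < m + B)%N,
      p (head 0%N (filter p (iota m B)))
    & forall j, (m <= j < head 0%N (filter p (iota m B)))%N -> ~~ p j].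
Proof.
elim: B m => [|B IH] m //=.
case hp: (p m) => /= h.
  split => //; first lia.
  move=> j hj; exfalso; lia.
have [h1 h2 h3] := IH m.+1 h.
split => //; first lia.
move=> j hj; case: (eqVneq j m) => [->|hjm]; first by rewrite hp.
apply: h3; move/eqP: hjm => hjm; lia.
Qed.

Lemma minidx_spec (s : seq int) v B : has (fun i => s`_i == v) (iota 1 B) ->
  [/\ (1 <= minidx s v B <= B)%N, s`_(minidx s v B) = v
    & forall j, (1 <= j < minidx s v B)%N -> s`_j != v].
Proof.
move=> h; have [h1 h2 h3] := head_filter_iota h.
rewrite /minidx; split; [lia | exact/eqP | done].
Qed.

Lemma minidx_restrict (s : seq int) v B N : has (fun i => s`_i == v) (iota 1 N) ->
  (minidx s v N <= B <= N)%N -> minidx s v B = minidx s v N.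
Proof.
move=> h hB; have [a1 a2 a3] := minidx_spec h.
have hB' : has (fun i => s`_i == v) (iota 1 B).
  apply/hasP; exists (minidx s v N); [rewrite mem_iota; lia | exact/eqP].
have [b1 b2 b3] := minidx_spec hB'.
case: (ltngtP (minidx s v B) (minidx s v N)) => // hc.
  by have := a3 (minidx s v B) ltac:(lia); rewrite b2 eqxx.
by have := b3 (minidx s v N) ltac:(lia); rewrite a2 eqxx.
Qed.

Lemma visit_has (s : seq int) N
  (hst : forall i, (0 < i <= N)%N -> `|s`_i - s`_i.-1| = 1) (hs1 : s`_1 = 1)
  (hN : (0 < N)%N) (k : nat) :
  (1 <= k)%N -> k%:R <= Rm s N -> has (fun i => s`_i == k%:R) (iota 1 N).
Proof.
move=> hk hkR.
have [i [hi hRi]] := Rm_att s hN.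
have [j [hj1 hj2]] := @ivt s N hst k%:R i.-1 1 ltac:(lia) ltac:(lia)
   ltac:(rewrite add1n prednK; lia).
apply/hasP; exists j; [rewrite mem_iota; lia | exact/eqP].
Qed.

Lemma visit_le (s : seq int) N
  (hst : forall i, (0 < i <= N)%N -> `|s`_i - s`_i.-1| = 1) (hs1 : s`_1 = 1)
  (hN : (0 < N)%N) (k l : nat) :
  (1 <= k)%N -> k%:R <= Rm s N -> (1 <= l <= N)%N ->
  (minidx s k%:R N <= l)%N = (k%:R <= Rm s l).
Proof.
move=> hk hkR hl.
have [a1 a2 a3] := minidx_spec (visit_has hst hs1 hN hk hkR).
apply/idP/idP => h.
  have := @Rm_ge s (minidx s k%:R N) (minidx s k%:R N) ltac:(lia).
  have := Rm_mono s h; lia.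
rewrite leqNgt; apply/negP => hl2.
have [i [hi hRi]] := Rm_att s (l:=l) ltac:(lia).
have [j [hj1 hj2]] := @ivt s N hst k%:R i.-1 1 ltac:(lia) ltac:(lia)
   ltac:(rewrite add1n prednK; lia).
by have := a3 j ltac:(lia); rewrite hj2 eqxx.
Qed.

Lemma An'P n (s : seq int) : (0 < n)%N -> s \in An' n ->
  [/\ size s = (2*n).+1, s`_0 = 0,
      (forall i, (0 < i <= 2*n)%N -> `|s`_i - s`_i.-1| = 1),
      s`_1 = 1 & s`_(2*n) = 0].
Proof.
move=> hn; rewrite unfold_in /An' => /and3P [hw h1 /eqP h2].
case/walkP: hw => hsz h0 hst.
have h : `|s`_1 - s`_0| = 1 := hst 1%N ltac:(lia).
split => //; lia.
Qed.

Lemma Mx_Rm (s : seq int) : (0 < size s)%N -> Mx s = Rm s (size s).-1.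
Proof. by move=> h; rewrite /Mx /Rm prednK. Qed.

Lemma MnE n (s : seq int) : (0 < n)%N -> s \in An' n ->
  [/\ Mx s = (Mn s)%:R, Rm s (2*n) = (Mn s)%:R & (1 <= Mn s)%N].
Proof.
move=> hn hA; have [hsz h0 hst hs1 hsN] := An'P hn hA.
have e : Mx s = Rm s (2*n) by rewrite Mx_Rm hsz.
have h1 := @Rm_ge s 1 (2*n) ltac:(lia).
rewrite /Mn; split; lia.
Qed.

Lemma a_aux_eq n (s : seq int) (hn : (0 < n)%N) (hA : s \in An' n) j :
  (j < Mn s)%N -> a_aux s j = minidx s (Mn s - j)%:R (2*n).
Proof.
have [hsz h0 hst hs1 hsN] := An'P hn hA.
have [hMx hRN hM1] := MnE hn hA.
have hN : (0 < 2 * n)%N by lia.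
elim: j => [|j IH] hj.
  change (minidx s (Mx s) (size s).-1 = minidx s (Mn s - 0)%:R (2 * n)).
  by rewrite hsz hMx subn0.
change (minidx s (Mx s - j.+1%:R) (a_aux s j) = minidx s (Mn s - j.+1)%:R (2 * n)).
rewrite IH; last lia.
have e : Mx s - j.+1%:R = (Mn s - j.+1)%:R by rewrite hMx; lia.
rewrite e.
have -> : (Mn s - j)%N = (Mn s - j.+1).+1 by lia.
set k := (Mn s - j.+1)%N.
have hk1 : (1 <= k)%N by rewrite /k; lia.
have hkM : (k.+1 <= Mn s)%N by rewrite /k; lia.
have hv1 := visit_has hst hs1 hN (k:=k.+1) ltac:(lia) ltac:(rewrite hRN; lia).
have [b1 b2 b3] := minidx_spec hv1.
apply: minidx_restrict.
  apply: visit_has => //; rewrite hRN; lia.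
rewrite (visit_le hst hs1 hN (k:=k) (l:=minidx s k.+1%:R (2*n)) hk1
   ltac:(rewrite hRN; lia) ltac:(lia)).
have := @Rm_ge s (minidx s k.+1%:R (2 * n)) (minidx s k.+1%:R (2 * n)) ltac:(lia).
rewrite b2 => hh.
apply/andP; split; [lia|lia].
Qed.

Lemma a_eq n (s : seq int) (hn : (0 < n)%N) (hA : s \in An' n) k :
  (1 <= k <= Mn s)%N -> a_ s k = minidx s k%:R (2*n).
Proof.
move=> hk; rewrite /a_ (a_aux_eq hn hA); last lia.
by rewrite subKn //; lia.
Qed.

Lemma b_eq n (s : seq int) (hn : (0 < n)%N) (hA : s \in An' n) k :
  (1 <= k < Mn s)%N -> b_ s k = (minidx s k.+1%:R (2*n)).-1.
Proof.
move=> hk.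
have [hsz h0 hst hs1 hsN] := An'P hn hA.
have [hMx hRN hM1] := MnE hn hA.
have hN : (0 < 2 * n)%N by lia.
rewrite /b_ (a_eq hn hA); last lia.
have hv1 := visit_has hst hs1 hN (k:=k.+1) ltac:(lia) ltac:(rewrite hRN; lia).
have [b1 b2 b3] := minidx_spec hv1.
move: b1 b2 b3; set B := minidx s k.+1%:R (2 * n) => b1 b2 b3.
have hB2 : (2 <= B)%N.
  case: (ltnP 1 B) => // hB; have eB : B = 1%N by lia.
  by move: b2; rewrite eB hs1; lia.
have hst1 : `|s`_B - s`_B.-1| = 1 := hst B ltac:(lia).
have hBm : s`_B.-1 = k%:R.
  case: (eqVneq s`_B.-1 k%:R) => // hne; exfalso.
  have hh : s`_B.-1 = k.+2%:R by move/eqP: hne => hne; lia.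
  have [j [hj1 hj2]] := @ivt s (2*n) hst k.+1%:R B.-2 1 ltac:(lia) ltac:(lia)
     ltac:(rewrite add1n prednK; [lia|lia]).
  by have := b3 j ltac:(lia); rewrite hj2 eqxx.
have [b hb] : exists b, B = b.+2 by exists B.-2; lia.
rewrite /maxidx hb -addn2 iotaD filter_cat last_cat.
have e1 : (s`_(1 + b) == k%:R) = true by apply/eqP; rewrite -hBm hb.
have e2 : (s`_((1 + b).+1) == k%:R) = false.
  apply/eqP; have -> : (1 + b).+1 = B by lia.
  rewrite b2; lia.
rewrite /= e1 e2 /=; lia.
Qed.

Lemma pred_eq n (s : seq int) (hn : (0 < n)%N) (hA : s \in An' n) m l :
  (1 <= m < Mn s)%N -> (1 <= l <= 2*n)%N ->
  (a_ s m <= l <= b_ s m)%N = (Rm s l == m%:R).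
Proof.
move=> hm hl.
have [hsz h0 hst hs1 hsN] := An'P hn hA.
have [hMx hRN hM1] := MnE hn hA.
have hN : (0 < 2 * n)%N by lia.
rewrite (a_eq hn hA); last lia.
rewrite (b_eq hn hA) //.
have hv1 := visit_has hst hs1 hN (k:=m.+1) ltac:(lia) ltac:(rewrite hRN; lia).
have [b1 b2 b3] := minidx_spec hv1.
have e1 := visit_le hst hs1 hN (k:=m) (l:=l) ltac:(lia) ltac:(rewrite hRN; lia) hl.
have e2 := visit_le hst hs1 hN (k:=m.+1) (l:=l) ltac:(lia) ltac:(rewrite hRN; lia) hl.
move: b1 e1 e2; set B := minidx s m.+1%:R (2 * n); set A := minidx s m%:R (2 * n).
move=> b1 e1 e2.
apply/idP/idP.
  case/andP => h1 h2.
  have h3 : (B <= l)%N = false by lia.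
  rewrite e1 in h1; rewrite e2 in h3.
  apply/eqP; move/negbT: h3; rewrite -ltNge => h3; lia.
move/eqP => h.
have h1 : (A <= l)%N by rewrite e1 h.
have h3 : (B <= l)%N = false by rewrite e2 h; lia.
apply/andP; split => //; lia.
Qed.

Lemma filt_eq n (s : seq int) (hn : (0 < n)%N) (hA : s \in An' n) l :
  (1 <= l <= 2*n)%N ->
  [seq m <- iota 1 (Mn s).-1 | (a_ s m <= l <= b_ s m)%N] =
  if (`|Rm s l|%N < Mn s)%N then [:: `|Rm s l|%N] else [::].
Proof.
move=> hl.
have [hsz h0 hst hs1 hsN] := An'P hn hA.
have [hMx hRN hM1] := MnE hn hA.
have hR1 := @Rm_ge s 1 l ltac:(lia).
have hRM := @Rm_mono s l (2*n) ltac:(lia).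
rewrite (@eq_in_filter _ _ (pred1 `|Rm s l|%N)); last first.
  move=> m; rewrite mem_iota => hm.
  rewrite (pred_eq hn hA) //; last lia.
  apply/eqP/eqP => /= h; lia.
case: ifP => h.
  apply: filter_pred1_uniq; first exact: iota_uniq.
  rewrite mem_iota; lia.
apply/eqP; rewrite -[_ == _]negbK -has_filter; apply/hasPn => m.
rewrite mem_iota => hm; apply/eqP => /= hm2; lia.
Qed.

Lemma wd n (s : seq int) (hn : (0 < n)%N) (hA : s \in An' n) : Phi1_well_defined n s.
Proof.
have [hsz h0 hst hs1 hsN] := An'P hn hA.
have [hMx hRN hM1] := MnE hn hA.
have hN : (0 < 2 * n)%N by lia.
split.
- rewrite hMx; apply: visit_has => //; rewrite hRN; lia.
- move=> k hk; rewrite (a_eq hn hA); last lia.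
  have hv := visit_has hst hs1 hN (k:=k) ltac:(lia) ltac:(rewrite hRN; lia).
  have [a1 a2 a3] := minidx_spec hv.
  apply/hasP; exists (minidx s k%:R (2 * n)); last exact/eqP.
  rewrite mem_iota.
  have := visit_le hst hs1 hN (k:=k) (l:=minidx s k.+1%:R (2*n)) ltac:(lia)
     ltac:(rewrite hRN; lia).
  have hv1 := visit_has hst hs1 hN (k:=k.+1) ltac:(lia) ltac:(rewrite hRN; lia).
  have [b1 b2 b3] := minidx_spec hv1.
  move=> e; have := e ltac:(lia).
  have := @Rm_ge s (minidx s k.+1%:R (2 * n)) (minidx s k.+1%:R (2 * n)) ltac:(lia).
  rewrite b2 => hh e2.
  have : (minidx s k%:R (2 * n) <= minidx s k.+1%:R (2 * n))%N by rewrite e2; lia.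
  lia.
- move=> l hl.
  rewrite -size_filter (filt_eq hn hA) // (a_eq hn hA); last lia.
  rewrite (visit_le hst hs1 hN) //; last by rewrite hRN; lia.
  have hR1 := @Rm_ge s 1 l ltac:(lia).
  have hRM := @Rm_mono s l (2*n) ltac:(lia).
  case: ifP => h /=; lia.
Qed.

Lemma Phi1_Pt n (s : seq int) (hn : (0 < n)%N) (hA : s \in An' n) : Phi1 s = Pt s.
Proof.
have [hsz h0 hst hs1 hsN] := An'P hn hA.
have [hMx hRN hM1] := MnE hn hA.
apply: (@eq_from_nth _ 0); first by rewrite !size_mkseq.
rewrite size_mkseq hsz => l hl.
rewrite !nth_mkseq ?hsz //.
case: eqP => // hl0.
rewrite (filt_eq hn hA); last lia.
have hR1 := @Rm_ge s 1 l ltac:(lia).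
have hRM := @Rm_mono s l (2*n) ltac:(lia).
case: ifP => h /=; lia.
Qed.

Lemma Pt_nth0 (s : seq int) : (0 < size s)%N -> (Pt s)`_0 = 0.
Proof. by move=> h; rewrite nth_mkseq. Qed.

Lemma Pt_nthS (s : seq int) l : (l.+1 < size s)%N -> (Pt s)`_l.+1 = 2 * Rm s l.+1 - s`_l.+1.
Proof. by move=> h; rewrite nth_mkseq. Qed.

Lemma Qt_nth0 (t : seq int) : (0 < size t)%N -> (Qt t)`_0 = 0.
Proof. by move=> h; rewrite nth_mkseq. Qed.

Lemma Qt_nthS (t : seq int) l : (l.+1 < size t)%N -> (Qt t)`_l.+1 =
  2 * Num.min (Jm t (size t).-1 l.+1) (t`_((size t).-1) %/ 2)%Z - t`_l.+1.
Proof. by move=> h; rewrite nth_mkseq. Qed.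

Lemma Pt_B n (s : seq int) (hn : (0 < n)%N) (hA : s \in An' n) : Pt s \in Bn' n.
Proof.
have [hsz h0 hst hs1 hsN] := An'P hn hA.
rewrite unfold_in /Bn'; apply/andP; split.
  apply: walkI; first by rewrite size_mkseq.
    by rewrite Pt_nth0 // hsz.
  case=> [|i] hi; first lia.
  rewrite [i.+1.-1]/= Pt_nthS; last lia.
  case: i hi => [|i] hi.
    rewrite Pt_nth0; last lia.
    rewrite Rm1 hs1; lia.
  rewrite Pt_nthS; last lia.
  have h1 : `|s`_i.+2 - s`_i.+1| = 1 := hst i.+2 ltac:(lia).
  have h2 := Rm_rec s i.+1.
  have h3 := @Rm_ge s i.+1 i.+1 ltac:(lia).
  lia.
apply/allP => i; rewrite mem_iota => hi.
case: i hi => [|i] hi; first lia.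
rewrite Pt_nthS; last lia.
have h3 := @Rm_ge s i.+1 i.+1 ltac:(lia).
have h4 := @Rm_ge s 1 i.+1 ltac:(lia).
lia.
Qed.

Lemma plateau (s : seq int) N
  (hst : forall i, (0 < i <= N)%N -> `|s`_i - s`_i.-1| = 1) d :
  forall l, (l + d = N)%N -> (1 <= l)%N -> Rm s l < Rm s N ->
  exists i, [/\ (l <= i < N)%N, Rm s i = Rm s l & s`_i = Rm s i].
Proof.
elim: d => [|d IH] l hld hl hR.
  have e : l = N by lia. by rewrite e in hR; rewrite ltxx in hR.
have hs : `|s`_l.+1 - s`_l| = 1 := hst l.+1 ltac:(lia).
have hRl := @Rm_ge s l l ltac:(lia).
have hrec := Rm_rec s l.
case: (ltP (Rm s l) s`_l.+1) => h.
  exists l; split; [lia|done|lia].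
have [i [hi1 hi2 hi3]] := IH l.+1 ltac:(lia) ltac:(lia) ltac:(lia).
exists i; split; [lia|lia|done].
Qed.

Lemma QP n (s : seq int) (hn : (0 < n)%N) (hA : s \in An' n) : Qt (Pt s) = s.
Proof.
have [hsz h0 hst hs1 hsN] := An'P hn hA.
have hszT : size (Pt s) = (2*n).+1 by rewrite size_mkseq.
have hTN : (Pt s)`_(2*n) = 2 * Rm s (2*n).
  have -> : (2 * n = (2*n).-1.+1)%N by lia.
  rewrite Pt_nthS; last lia.
  have -> : ((2*n).-1.+1 = 2 * n)%N by lia.
  rewrite hsN; lia.
have hM : ((Pt s)`_(2*n) %/ 2)%Z = Rm s (2*n) by rewrite hTN mulKz.
apply: (@eq_from_nth _ 0); first by rewrite size_mkseq hszT.
rewrite size_mkseq hszT => l hl.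
case: l hl => [|l] hl; first by rewrite Qt_nth0 ?hszT // h0.
rewrite Qt_nthS; last lia.
rewrite hszT [(2*n).+1.-1]/= hM Pt_nthS; last lia.
have hJ : Rm s l.+1 <= Jm (Pt s) (2*n) l.+1.
  apply: Jm_ge; first lia.
  case=> [|i] hi; first lia.
  rewrite Pt_nthS; last lia.
  have := @Rm_ge s i.+1 i.+1 ltac:(lia).
  have := @Rm_mono s l.+1 i.+1 ltac:(lia).
  lia.
have hRM := @Rm_mono s l.+1 (2*n) ltac:(lia).
have e : Num.min (Jm (Pt s) (2 * n) l.+1) (Rm s (2 * n)) = Rm s l.+1.
  case: (ltP (Rm s l.+1) (Rm s (2*n))) => h; last lia.
  have [i [hi1 hi2 hi3]] := @plateau s (2*n) hst (2*n - l.+1) l.+1 ltac:(lia) ltac:(lia) h.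
  have := @Jm_le (Pt s) (2*n) l.+1 i ltac:(lia).
  case: i hi1 hi2 hi3 => [|i] hi1 hi2 hi3; first lia.
  rewrite Pt_nthS; last lia.
  lia.
rewrite e; lia.
Qed.

Lemma parity (t : seq int) N (h0 : t`_0 = 0)
  (hst : forall i, (0 < i <= N)%N -> `|t`_i - t`_i.-1| = 1) i :
  (i <= N)%N -> exists k : int, t`_i = i%:R - 2 * k.
Proof.
elim: i => [|i IH] hi.
  by exists 0; rewrite h0; lia.
have [k hk] := IH ltac:(lia).
have hs : `|t`_i.+1 - t`_i| = 1 := hst i.+1 ltac:(lia).
have : t`_i.+1 = t`_i + 1 \/ t`_i.+1 = t`_i - 1 by lia.
case => h; [exists k | exists (k + 1)]; lia.
Qed.

Lemma surj n (t : seq int) (hn : (0 < n)%N) (hB : t \in Bn' n) :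
  exists2 s, s \in An' n & Pt s = t.
Proof.
move: hB; rewrite unfold_in /Bn' => /andP [hw /allP hpos].
case/walkP: hw => hsz h0 hst.
have hp : forall i, (1 <= i <= 2*n)%N -> 0 < t`_i.
  by move=> i hi; apply: hpos; rewrite mem_iota; lia.
have ht1 : t`_1 = 1.
  have h : `|t`_1 - t`_0| = 1 := hst 1%N ltac:(lia).
  have := hp 1%N ltac:(lia); lia.
have [k hk] := @parity t (2*n) h0 hst (2*n) (leqnn _).
have eN : (size t).-1 = (2*n)%N by rewrite hsz.
set M := (t`_(2*n) %/ 2)%Z.
have hM : M = n%:R - k by rewrite /M hk (_ : (2*n)%:R - 2 * k = 2 * (n%:R - k)); [rewrite mulKz | lia].
have htN : t`_(2*n) = 2 * M by rewrite hM hk; lia.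
have hM1 : 1 <= M by have := hp (2*n)%N ltac:(lia); lia.
have hJ1 : forall l, (1 <= l <= 2*n)%N -> 1 <= Jm t (2*n) l.
  move=> l hl; apply: Jm_ge; first lia.
  by move=> i hi; have := hp i ltac:(lia); lia.
have hJle : forall l, (1 <= l <= 2*n)%N -> Jm t (2*n) l <= t`_l.
  by move=> l hl; apply: Jm_le; lia.
set s := Qt t.
have hszs : size s = (2*n).+1 by rewrite /s size_mkseq.
have hsS : forall l, (l < 2*n)%N ->
    s`_l.+1 = 2 * Num.min (Jm t (2*n) l.+1) M - t`_l.+1.
  by move=> l hl; rewrite /s Qt_nthS ?eN //; lia.
have hs0 : s`_0 = 0 by rewrite /s Qt_nth0 // hsz.
have hJ1e : Jm t (2*n) 1 = 1.
  have := hJ1 1%N ltac:(lia); have := hJle 1%N ltac:(lia); lia.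
have hs1 : s`_1 = 1.
  rewrite (hsS 0%N); last lia.
  rewrite hJ1e ht1; lia.
have hA : s \in An' n.
  rewrite unfold_in /An'; apply/and3P; split.
  - apply: walkI => //.
    case=> [|i] hi; first lia.
    rewrite [i.+1.-1]/=.
    case: i hi => [|i] hi.
      by rewrite hs1 hs0; lia.
    rewrite !hsS; [|lia|lia].
    have e := @Jm_rec t (2*n) i.+1 ltac:(lia).
    have h1 := hJle i.+2 ltac:(lia).
    have h2 : `|t`_i.+2 - t`_i.+1| = 1 := hst i.+2 ltac:(lia).
    lia.
  - by rewrite hs1.
  - have -> : (2 * n = (2*n).-1.+1)%N by lia.
    rewrite hsS; last lia.
    have -> : ((2*n).-1.+1 = 2 * n)%N by lia.
    rewrite Jm_N htN; lia.
exists s => //.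
have hR : forall l, (1 <= l <= 2*n)%N -> Rm s l = Num.min (Jm t (2*n) l) M.
  elim=> [|l IH] hl; first lia.
  case: l IH hl => [|l] IH hl.
    by rewrite Rm1 hs1 hJ1e; lia.
  rewrite Rm_rec IH; last lia.
  rewrite hsS; last lia.
  have e := @Jm_rec t (2*n) l.+1 ltac:(lia).
  have h1 := hJle l.+2 ltac:(lia).
  have h2 : `|t`_l.+2 - t`_l.+1| = 1 := hst l.+2 ltac:(lia).
  lia.
apply: (@eq_from_nth _ 0); first by rewrite size_mkseq hszs hsz.
rewrite size_mkseq hszs => l hl.
case: l hl => [|l] hl; first by rewrite Pt_nth0 ?hszs // h0.
rewrite Pt_nthS ?hszs //.
rewrite hR; last lia.
rewrite hsS; last lia.
lia.
Qed.

Theorem theorem1 (n : nat) (hn : (0 < n)%N) :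
  {in An' n, forall s, Phi1_well_defined n s} /\
  {in An' n, forall s, Phi1 s \in Bn' n} /\
  {in An' n &, injective Phi1} /\
  (forall t, t \in Bn' n -> exists2 s, s \in An' n & Phi1 s = t).
Proof.
split; first by move=> s hA; exact: wd.
split; first by move=> s hA; rewrite (Phi1_Pt hn hA); exact: Pt_B.
split.
  move=> s s' hA hA' e.
  by rewrite -(QP hn hA) -(QP hn hA') -(Phi1_Pt hn hA) -(Phi1_Pt hn hA') e.
move=> t hB; have [s hA e] := surj hn hB.
by exists s => //; rewrite (Phi1_Pt hn hA).
Qed.
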